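(* Let $0\le\beta\le1$ and let $f\in\mathcal{A}_{\beta}$ with $f(z)=z+\sum_{n=2}^\infty a_nz^n$, and let $f^{-1}(w)=w+\sum_{n=2}^\infty A_nw^n$ be the inverse of $f$ near $0$, so that $A_2=-a_2$ and $A_3=-a_3+2a_2^2$. Then \[ |A_2|\le\frac{2}{2-\beta}\qquad\text{and}\qquad |A_3|\le\frac{2(8-4\beta-\beta^2)}{(2-\beta)^2(3-2\beta)}. \] Both bounds are sharp (attained by some $f\in\mathcal{A}_\beta$).
   Context: $\mathbb{D}$ is the open unit disk; $\mathcal{A}$ is the class of holomorphic $f$ on $\mathbb{D}$ with $f(0)=0$, $f'(0)=1$. For $\beta\in[0,1]$, $\mathcal{A}_{\beta}=\{f\in\mathcal{A}: \operatorname{Re}\big(\beta\, f(z)/z+(1-\beta)f'(z)\big)>0 \text{ for all } z\in\mathbb{D}\}$. The inverse coefficients $A_n$ are the Taylor coefficients of the local inverse $f^{-1}$ at $0$ (which exists since $f'(0)=1$). *)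

(* Defs.v *)
From Stdlib Require Import Reals.
From Coquelicot Require Import Coquelicot.
Open Scope R_scope.

Definition cderiv (f : C -> C) (z d : C) : Prop :=
  is_derive (K := C_AbsRing) (V := C_NormedModule) f z d.

Definition in_disk (z : C) : Prop := Cmod z < 1.

Definition classA (f : C -> C) : Prop :=
  (forall z, in_disk z -> exists d, cderiv f z d) /\
  f (RtoC 0) = RtoC 0 /\ cderiv f (RtoC 0) (RtoC 1).

(* At z = 0 the quotient f(z)/z is understood as its limit f'(0) = 1, so
   the expression equals 1 > 0 there automatically; we impose the
   condition for z <> 0 (where f(z)/z is literally defined). *)
Definition classA_beta (beta : R) (f : C -> C) : Prop :=
  classA f /\
  forall z d, in_disk z -> z <> RtoC 0 -> cderiv f z d ->
    0 < Re (Cplus (Cmult (RtoC beta) (Cdiv (f z) z))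
                  (Cmult (RtoC (1 - beta)) d)).

Definition taylor_on_disk (f : C -> C) (a : nat -> C) : Prop :=
  forall z, in_disk z -> is_pseries (K := C_AbsRing) (V := C_NormedModule) a z (f z).

Definition invA2 (a : nat -> C) : C := Copp (a 2%nat).
Definition invA3 (a : nat -> C) : C :=
  Cplus (Copp (a 3%nat)) (Cmult (RtoC 2) (Cmult (a 2%nat) (a 2%nat))).

(* Main.v *)
Require Import Defs.
From Stdlib Require Import Reals Lra Lia Psatz FunctionalExtensionality ClassicalEpsilon.
From Coquelicot Require Import Coquelicot.
Open Scope R_scope.

Lemma sq_geom (q : R) : 0 < q < 1 ->
  ex_series (fun n => (INR n + 1)^2 * q^n).
Proof.
  intros Hq.
  assert (H := ex_series_DAlembert (fun n => (INR n + 1)^2 * q^n) q (proj2 Hq)).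
  assert (Hnz : forall n, (INR n + 1)^2 * q^n <> 0).
  { intros n. apply Rmult_integral_contrapositive; split.
    apply pow_nonzero. pose proof (pos_INR n); lra.
    apply pow_nonzero; lra. }
  eapply ex_series_ext; [| apply H; [exact Hnz|]].
  { intros n. cbv beta. rewrite Rabs_pos_eq; auto.
    apply Rmult_le_pos. apply pow_le. pose proof (pos_INR n); lra. apply pow_le; lra. }
  apply is_lim_seq_ext with (fun n => q * (1 + / (INR n + 1)) ^ 2).
  { intros n. rewrite S_INR. pose proof (pos_INR n).
    rewrite Rabs_pos_eq.
    - simpl. field. split; [apply pow_nonzero; lra | lra].
    - cbv beta. apply Rlt_le, Rdiv_lt_0_compat; apply Rmult_lt_0_compat; apply pow_lt; lra. }
  assert (H1 : is_lim_seq (fun n => INR n + 1) p_infty).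
  { apply is_lim_seq_plus with (l1 := p_infty) (l2 := 1). apply is_lim_seq_INR.
    apply is_lim_seq_const. unfold is_Rbar_plus; simpl; reflexivity. }
  assert (H2 : is_lim_seq (fun n => 1 + / (INR n + 1)) 1).
  { replace (Finite 1) with (Rbar_plus 1 (Rbar_inv p_infty)) by (simpl; f_equal; ring).
    apply is_lim_seq_plus'. apply is_lim_seq_const.
    apply (is_lim_seq_inv _ _ H1). discriminate. }
  assert (H3 : is_lim_seq (fun n => (1 + / (INR n + 1))^2) 1).
  { apply is_lim_seq_ext with (fun n => (1 + / (INR n + 1)) * (1 + / (INR n + 1))).
    intros; simpl; ring.
    replace (Finite 1) with (Finite (1 * 1)) by (f_equal; ring).
    apply is_lim_seq_mult'; auto. }
  replace (Finite q) with (Rbar_mult q 1) by (simpl; f_equal; ring).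
  apply is_lim_seq_scal_l. exact H3.
Qed.

Definition cser (u : nat -> C) (l : C) := @is_series C_AbsRing C_NormedModule u l.
Definition csum (u : nat -> C) (n : nat) : C := @sum_n C_AbelianMonoid u n.

Lemma csum_S u n : csum u (S n) = Cplus (csum u n) (u (S n)).
Proof. unfold csum. rewrite sum_Sn. reflexivity. Qed.
Lemma csum_O u : csum u O = u O.
Proof. unfold csum. rewrite sum_O. reflexivity. Qed.

Lemma ball_C_Cmod (l x : C) e : ball (M:=C_UniformSpace) l e x -> Cmod (Cminus x l) < 2 * e.
Proof.
  intros [H1 H2]. unfold ball in H1, H2. simpl in H1, H2. unfold AbsRing_ball in H1, H2.
  simpl in H1, H2. unfold abs, minus, plus, opp in H1, H2. simpl in H1, H2.
  pose proof (Cmod_2Rmax (Cminus x l)).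
  assert (sqrt 2 < 2). { pose proof (sqrt_sqrt 2 ltac:(lra)). pose proof (sqrt_pos 2). nra. }
  destruct x as [x1 x2], l as [l1 l2]. simpl in *.
  assert (Rmax (Rabs (x1 + - l1)) (Rabs (x2 + - l2)) < e).
  { apply Rmax_lub_lt; auto. }
  assert (0 <= Rmax (Rabs (x1 + - l1)) (Rabs (x2 + - l2))).
  { eapply Rle_trans; [apply Rabs_pos | apply Rmax_l]. }
  assert (0 < sqrt 2). { apply sqrt_lt_R0; lra. }
  nra.
Qed.

Lemma cser_spec u l : cser u l <->
  (forall eps, 0 < eps -> exists N, forall n, (N <= n)%nat -> Cmod (Cminus (csum u n) l) < eps).
Proof.
  split.
  - intros H eps Heps. unfold cser, is_series in H.
    pose proof (proj1 (filterlim_locally _ _) H (mkposreal (eps/2) ltac:(lra))) as H'.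
    destruct H' as [N HN]. exists N. intros n Hn. specialize (HN n Hn).
    apply ball_C_Cmod in HN. simpl in HN. unfold csum. eapply Rlt_le_trans; [exact HN| lra].
  - intros H. unfold cser, is_series. apply filterlim_locally. intros eps.
    destruct (H eps (cond_pos eps)) as [N HN]. exists N. intros n Hn.
    apply norm_compat1. apply Rle_lt_trans with (Cmod (Cminus (csum u n) l)); [right; reflexivity | apply HN; exact Hn].
Qed.

Lemma cser_unique u l1 l2 : cser u l1 -> cser u l2 -> l1 = l2.
Proof.
  intros H1 H2. rewrite cser_spec in H1, H2.
  destruct (Req_dec (Cmod (Cminus l1 l2)) 0) as [E|E].
  - apply Cmod_eq_0 in E. 
    replace l1 with (Cplus (Cminus l1 l2) l2) by ring. rewrite E. ring.
  - assert (Hp : 0 < Cmod (Cminus l1 l2)) by (pose proof (Cmod_ge_0 (Cminus l1 l2)); lra).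
    destruct (H1 _ (ltac:(lra) : 0 < Cmod (Cminus l1 l2) / 2)) as [N1 HN1].
    destruct (H2 _ (ltac:(lra) : 0 < Cmod (Cminus l1 l2) / 2)) as [N2 HN2].
    specialize (HN1 (max N1 N2) ltac:(lia)). specialize (HN2 (max N1 N2) ltac:(lia)).
    pose proof (Cmod_triangle (Cminus l1 (csum u (max N1 N2))) (Cminus (csum u (max N1 N2)) l2)).
    replace (Cplus (Cminus l1 (csum u (max N1 N2))) (Cminus (csum u (max N1 N2)) l2))
      with (Cminus l1 l2) in H by ring.
    rewrite <- Cmod_opp in HN1.
    replace (Copp (Cminus (csum u (max N1 N2)) l1)) with (Cminus l1 (csum u (max N1 N2))) in HN1 by ring.
    lra.
Qed.

Lemma cser_plus u v a b : cser u a -> cser v b -> cser (fun n => Cplus (u n) (v n)) (Cplus a b).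
Proof. intros. apply (is_series_plus u v a b); auto. Qed.

Lemma cser_minus u v a b : cser u a -> cser v b -> cser (fun n => Cminus (u n) (v n)) (Cminus a b).
Proof. intros. apply (is_series_minus u v a b); auto. Qed.

Lemma cser_scal c u a : cser u a -> cser (fun n => Cmult c (u n)) (Cmult c a).
Proof. intros. apply (is_series_scal c u a); auto. Qed.

Lemma cser_ext u v a : (forall n, u n = v n) -> cser u a -> cser v a.
Proof. intros. apply (is_series_ext u v a); auto. Qed.

Lemma cser_shift u a : cser u a -> cser (fun n => u (S n)) (Cminus a (u O)).
Proof.
  intros H. apply (is_series_incr_1 u (Cminus a (u O))).
  match goal with |- is_series _ ?x => replace x with a end. exact H.
  apply injective_projections; simpl; ring.
Qed.

Lemma cser_unshift u a : cser (fun n => u (S n)) a -> cser u (Cplus a (u O)).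
Proof.
  intros H. apply (is_series_decr_1 u (Cplus a (u O))).
  match goal with |- is_series _ ?x => replace x with a end. exact H.
  apply injective_projections; simpl; ring.
Qed.

Lemma csum_conj u n : csum (fun k => Cconj (u k)) n = Cconj (csum u n).
Proof.
  induction n. rewrite !csum_O. auto.
  rewrite !csum_S, IHn. rewrite Cplus_conj. auto.
Qed.

Lemma cser_conj u a : cser u a -> cser (fun n => Cconj (u n)) (Cconj a).
Proof.
  rewrite !cser_spec. intros H eps Heps. destruct (H eps Heps) as [N HN].
  exists N. intros n Hn. rewrite csum_conj, <- Cminus_conj, Cmod_conj. auto.
Qed.

Lemma sum_n_R_spec (b : nat -> R) B : is_series b B ->
  forall eps, 0 < eps -> exists N, forall n, (N <= n)%nat -> Rabs (sum_n b n - B) < eps.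
Proof.
  intros H eps Heps.
  assert (H' : is_lim_seq (sum_n b) B) by exact H.
  apply is_lim_seq_spec in H'. destruct (H' (mkposreal eps Heps)) as [N HN].
  exists N. intros n Hn. apply HN. exact Hn.
Qed.

Lemma cser_norm_le u U (b : nat -> R) B : cser u U -> (forall n, Cmod (u n) <= b n) ->
  is_series b B -> Cmod U <= B.
Proof.
  intros Hu Hb HB.
  assert (Hs : forall n, Cmod (csum u n) <= sum_n b n).
  { induction n. rewrite csum_O, sum_O. auto.
    rewrite csum_S, sum_Sn. eapply Rle_trans. apply Cmod_triangle.
    change (plus (sum_n b n) (b (S n))) with (sum_n b n + b (S n)).
    apply Rplus_le_compat; auto. }
  destruct (Rle_lt_dec (Cmod U) B) as [L|L]; auto. exfalso.
  rewrite cser_spec in Hu.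
  destruct (Hu ((Cmod U - B)/2) ltac:(lra)) as [N1 HN1].
  destruct (sum_n_R_spec b B HB ((Cmod U - B)/2) ltac:(lra)) as [N2 HN2].
  specialize (HN1 (max N1 N2) ltac:(lia)). specialize (HN2 (max N1 N2) ltac:(lia)).
  specialize (Hs (max N1 N2)).
  pose proof (Cmod_triangle (Cminus U (csum u (max N1 N2))) (csum u (max N1 N2))).
  replace (Cplus (Cminus U (csum u (max N1 N2))) (csum u (max N1 N2))) with U in H by ring.
  rewrite <- Cmod_opp in HN1.
  replace (Copp (Cminus (csum u (max N1 N2)) U)) with (Cminus U (csum u (max N1 N2))) in HN1 by ring.
  apply Rabs_def2 in HN2. lra.
Qed.

Lemma cser_exists u (b : nat -> R) : (forall n, Cmod (u n) <= b n) -> ex_series b ->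
  exists U, cser u U.
Proof.
  intros Hb HB.
  assert (H : @ex_series C_AbsRing C_CompleteNormedModule u).
  { apply (ex_series_le (V := C_CompleteNormedModule) u b); auto. }
  destruct H as [U HU]. exists U. exact HU.
Qed.

Lemma pow_n_C (x : C) n : @pow_n C_Ring x n = Cpow x n.
Proof. induction n; simpl; auto. Qed.

Lemma pser_cser a z l : is_pseries (K:=C_AbsRing) (V:=C_NormedModule) a z l <->
  cser (fun n => Cmult (a n) (Cpow z n)) l.
Proof.
  split; intros H.
  - apply (is_series_ext _ _ l) with (2 := H). intros n. 
    change (Cmult (pow_n z n) (a n) = Cmult (a n) (Cpow z n)).
    transitivity (Cmult (Cpow z n) (a n)); [f_equal; apply pow_n_C | ring].
  - apply (is_series_ext _ _ l) with (2 := H). intros n. 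
    change (Cmult (a n) (Cpow z n) = Cmult (pow_n z n) (a n)).
    transitivity (Cmult (Cpow z n) (a n)); [ring | f_equal; symmetry; apply pow_n_C].
Qed.

Lemma sum_f_nonneg (f : nat -> R) N : (forall i, 0 <= f i) -> 0 <= sum_f_R0 f N.
Proof. intros Hf. induction N; simpl; auto. specialize (Hf (S N)). lra. Qed.

Lemma sum_f_ge (f : nat -> R) k N : (forall i, 0 <= f i) -> (k <= N)%nat -> f k <= sum_f_R0 f N.
Proof.
  intros Hf Hk. induction N.
  - inversion Hk. simpl. lra.
  - destruct (Nat.eq_dec k (S N)) as [E|E].
    + subst. simpl. pose proof (sum_f_nonneg f N Hf). lra.
    + simpl. specialize (Hf (S N)). assert (k <= N)%nat by lia. specialize (IHN H). lra.
Qed.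

Lemma cser_bounded u l : cser u l -> exists M, forall n, Cmod (u n) <= M.
Proof.
  intros H. rewrite cser_spec in H. destruct (H 1 ltac:(lra)) as [N HN].
  exists (2 + sum_f_R0 (fun k => Cmod (u k)) N). intros n.
  assert (0 <= sum_f_R0 (fun k => Cmod (u k)) N).
  { clear. induction N; simpl. apply Cmod_ge_0. pose proof (Cmod_ge_0 (u (S N))). lra. }
  destruct (Compare_dec.le_lt_dec n N) as [L|L].
  - pose proof (sum_f_ge (fun k => Cmod (u k)) n N (fun i => Cmod_ge_0 _) L). simpl in H1. lra.
  - destruct n as [|n]. lia.
    pose proof (HN n ltac:(lia)). pose proof (HN (S n) ltac:(lia)).
    rewrite csum_S in H2.
    replace (u (S n)) with (Cminus (Cminus (Cplus (csum u n) (u (S n))) l) (Cminus (csum u n) l)) by ring.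
    eapply Rle_trans. 
    { replace (Cminus (Cminus (Cplus (csum u n) (u (S n))) l) (Cminus (csum u n) l)) with
        (Cplus (Cminus (Cplus (csum u n) (u (S n))) l) (Copp (Cminus (csum u n) l))) by ring.
      apply Cmod_triangle. }
    rewrite Cmod_opp. lra.
Qed.

Definition Rp (y z : C) n : C :=
  Cminus (Cminus (Cpow y (S n)) (Cpow z (S n))) (Cmult (Cmult (RtoC (INR (S n))) (Cpow z n)) (Cminus y z)).

Lemma Rp_rec y z n : Rp y z (S n) = Cplus (Cmult y (Rp y z n))
   (Cmult (Cmult (RtoC (INR (S n))) (Cpow z n)) (Cmult (Cminus y z) (Cminus y z))).
Proof.
  unfold Rp. rewrite (S_INR (S n)). rewrite !Cpow_S.
  replace (RtoC (INR (S n) + 1)) with (Cplus (RtoC (INR (S n))) 1) by (apply injective_projections; simpl; ring).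
  ring.
Qed.

Lemma Rp_bound (y z : C) (s : R) n : Cmod y <= s -> Cmod z <= s ->
  Cmod (Rp y z n) * s <= (INR n + 1)^2 * s^n * (Cmod (Cminus y z))^2.
Proof.
  intros Hy Hz. assert (Hs : 0 <= s) by (pose proof (Cmod_ge_0 y); lra).
  set (d := Cmod (Cminus y z)). assert (Hd : 0 <= d) by apply Cmod_ge_0.
  induction n.
  - unfold Rp. replace (Cminus (Cminus (Cpow y 1) (Cpow z 1)) (Cmult (Cmult (RtoC (INR 1)) (Cpow z 0)) (Cminus y z))) with (RtoC 0).
    rewrite Cmod_0. simpl. nra.
    simpl. apply injective_projections; simpl; ring.
  - rewrite Rp_rec.
    assert (H1 : Cmod (Cplus (Cmult y (Rp y z n))
       (Cmult (Cmult (RtoC (INR (S n))) (Cpow z n)) (Cmult (Cminus y z) (Cminus y z))))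
       <= s * Cmod (Rp y z n) + (INR n + 1) * s^n * d^2).
    { eapply Rle_trans. apply Cmod_triangle. rewrite !Cmod_mult, Cmod_pow.
      rewrite Cmod_R, Rabs_pos_eq by apply pos_INR. rewrite S_INR.
      pose proof (Cmod_ge_0 (Rp y z n)). pose proof (pos_INR n).
      assert (Hzn : Cmod z ^ n <= s ^ n) by (apply pow_incr; split; [apply Cmod_ge_0 | auto]).
      assert (0 <= Cmod z ^ n) by (apply pow_le; apply Cmod_ge_0).
      change (Cmod (Cminus y z)) with d.
      apply Rplus_le_compat. apply Rmult_le_compat_r; auto.
      replace (d * d) with (d ^ 2) by ring.
      apply Rmult_le_compat_r. nra. apply Rmult_le_compat_l; lra. }
    pose proof (Cmod_ge_0 (Rp y z n)). pose proof (pos_INR n).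
    assert (0 <= s ^ n) by (apply pow_le; auto).
    eapply Rle_trans; [apply Rmult_le_compat_r; [exact Hs| exact H1]|].
    assert (H2a : 0 <= d^2) by nra.
    assert (H4 : s * (Cmod (Rp y z n) * s) <= s * ((INR n + 1) ^ 2 * s ^ n * d ^ 2)).
    { apply Rmult_le_compat_l; auto. }
    rewrite S_INR. simpl pow. simpl pow in H4. 
    assert (0 <= s * s ^ n * (d * (d * 1))) by (apply Rmult_le_pos; nra).
    nra.
Qed.

Definition dser (a : nat -> C) (n : nat) : C := Cmult (RtoC (INR (S n))) (a (S n)).

Theorem pser_deriv (a : nat -> C) (g : C -> C) :
  (forall w, Cmod w < 1 -> cser (fun n => Cmult (a n) (Cpow w n)) (g w)) ->
  forall z, Cmod z < 1 -> exists D, cser (fun n => Cmult (dser a n) (Cpow z n)) D /\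
     is_derive (K:=C_AbsRing) (V:=C_NormedModule) g z D.
Proof.
  intros Hg z Hz.
  set (r0 := Cmod z). assert (Hr0 : 0 <= r0) by apply Cmod_ge_0. assert (Hr1 : r0 < 1) by exact Hz.
  set (s := (2 * r0 + 1) / 3). set (rho := (r0 + 2) / 3). set (q := s / rho).
  assert (Hs : 0 < s) by (unfold s; lra). assert (Hrho : 0 < rho) by (unfold rho; lra).
  assert (Hrho1 : rho < 1) by (unfold rho, r0 in *; lra).
  assert (Hsr : s < rho) by (unfold s, rho; lra).
  assert (Hq : 0 < q < 1).
  { unfold q. split. apply Rdiv_lt_0_compat; lra. apply (Rmult_lt_reg_r rho); auto.
    unfold Rdiv. rewrite Rmult_assoc, Rinv_l, Rmult_1_r; lra. }
  assert (Hsq : s = q * rho) by (unfold q; field; lra). clearbody q.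
  assert (Hrc : Cmod (RtoC rho) < 1) by (rewrite Cmod_R, Rabs_pos_eq; lra).
  destruct (cser_bounded _ _ (Hg (RtoC rho) Hrc)) as [M HM].
  assert (HM0 : 0 <= M) by (eapply Rle_trans; [apply Cmod_ge_0 | apply (HM O)]).
  assert (Hcoef : forall n, Cmod (a (S n)) * s ^ n <= (M / rho) * q ^ n).
  { intros n. specialize (HM (S n)). rewrite Cmod_mult, Cmod_pow, Cmod_R, Rabs_pos_eq in HM by lra.
    rewrite Hsq, Rpow_mult_distr. simpl pow in HM.
    apply Rmult_le_reg_r with rho; auto.
    replace (M / rho * q ^ n * rho) with (q ^ n * M) by (field; lra).
    assert (0 <= q ^ n) by (apply pow_le; lra).
    replace (Cmod (a (S n)) * (q ^ n * rho ^ n) * rho) with (q ^ n * (Cmod (a (S n)) * (rho * rho ^ n))) by ring.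
    apply Rmult_le_compat_l; auto. }
  assert (HS2 := Series_correct _ (sq_geom q Hq)).
  set (S2 := Series (fun n => (INR n + 1) ^ 2 * q ^ n)) in HS2.
  assert (HD : exists D, cser (fun n => Cmult (dser a n) (Cpow z n)) D).
  { apply cser_exists with (fun n => (M / rho) * ((INR n + 1) ^ 2 * q ^ n)).
    - intros n. unfold dser. rewrite !Cmod_mult, Cmod_pow, Cmod_R, Rabs_pos_eq by apply pos_INR.
      rewrite S_INR. pose proof (pos_INR n). pose proof (Hcoef n).
      assert (Cmod z ^ n <= s ^ n) by (apply pow_incr; unfold s, r0 in *; split; lra).
      pose proof (Cmod_ge_0 (a (S n))). assert (0 <= q ^ n) by (apply pow_le; lra).
      assert (0 <= M / rho) by (apply Rdiv_le_0_compat; lra).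
      assert (Cmod (a (S n)) * Cmod z ^ n <= M / rho * q ^ n).
      { eapply Rle_trans; [| exact H0]. apply Rmult_le_compat_l; auto. }
      assert (0 <= Cmod (a (S n)) * Cmod z ^ n) by (apply Rmult_le_pos; auto; apply pow_le, Cmod_ge_0).
      simpl pow. nra.
    - apply (ex_series_scal_l (M / rho) _ (sq_geom q Hq)). }
  destruct HD as [D HD]. exists D. split; auto.
  unfold is_derive, filterdiff. split. apply is_linear_scal_l.
  intros x Hx. assert (Hzx : z = x) by (apply (@is_filter_lim_locally_unique C_AbsRing (AbsRing_NormedModule C_AbsRing)); exact Hx). subst x.
  intros eps.
  set (C0 := Rabs (M / (rho * s) * S2)).
  assert (HC0 : 0 <= C0) by apply Rabs_pos.
  assert (Hdel : 0 < Rmin ((s - r0) / 2) (eps / (2 * (C0 + 1)))).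
  { apply Rmin_pos. unfold s; lra. apply Rdiv_lt_0_compat. apply cond_pos. lra. }
  exists (mkposreal _ Hdel). intros y Hy. assert (Hy2 : Cmod (Cminus y z) < 2 * Rmin ((s - r0) / 2) (eps / (2 * (C0 + 1)))) by (eapply Rlt_le_trans; [exact Hy|]; simpl; pose proof (Rmin_l ((s - r0) / 2) (eps / (2 * (C0 + 1)))); pose proof (Rmin_r ((s - r0) / 2) (eps / (2 * (C0 + 1)))); pose proof (cond_pos eps); assert (0 <= Rmin ((s - r0) / 2) (eps / (2 * (C0 + 1)))) by lra; lra). clear Hy. rename Hy2 into Hy.
  set (d := Cmod (Cminus y z)) in *.
  assert (Hd0 : 0 <= d) by apply Cmod_ge_0.
  assert (Hd1 : d <= s - r0).
  { pose proof (Rmin_l ((s - r0) / 2) (eps / (2 * (C0 + 1)))). lra. }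
  assert (Hd2 : d * (C0 + 1) <= eps).
  { pose proof (Rmin_r ((s - r0) / 2) (eps / (2 * (C0 + 1)))).
    assert (E1 : 2 * (eps / (2 * (C0 + 1))) = eps / (C0 + 1)) by (field; lra).
    assert (E2 : eps / (C0 + 1) * (C0 + 1) = eps) by (field; lra).
    assert (d <= eps / (C0 + 1)) by lra.
    rewrite <- E2. apply Rmult_le_compat_r; lra. }
  assert (Hy1 : Cmod y <= s).
  { replace y with (Cplus (Cminus y z) z) by ring. eapply Rle_trans. apply Cmod_triangle.
    fold d. unfold r0 in *. lra. }
  assert (Hz1 : Cmod z <= s) by (unfold s, r0 in *; lra).
  assert (Hy1' : Cmod y < 1) by lra.
  pose proof (cser_shift _ _ (Hg y Hy1')) as Gy.
  pose proof (cser_shift _ _ (Hg z Hz)) as Gz.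
  pose proof (cser_minus _ _ _ _ Gy Gz) as G.
  pose proof (cser_scal (Cminus y z) _ _ HD) as GD.
  pose proof (cser_minus _ _ _ _ G GD) as GR.
  apply cser_ext with (v := fun n => Cmult (a (S n)) (Rp y z n)) in GR.
  2:{ intros n. unfold Rp, dser. simpl Cpow. ring. }
  replace (Cminus (Cminus (Cminus (g y) (Cmult (a O) (Cpow y O))) (Cminus (g z) (Cmult (a O) (Cpow z O)))) (Cmult (Cminus y z) D))
    with (Cminus (Cminus (g y) (g z)) (Cmult (Cminus y z) D)) in GR by (simpl; ring).
  set (K := M / (rho * s) * d ^ 2).
  assert (HB : is_series (fun n => K * ((INR n + 1) ^ 2 * q ^ n)) (K * S2)).
  { apply (is_series_scal_l K _ _ HS2). }
  pose proof (cser_norm_le _ _ (fun n => K * ((INR n + 1) ^ 2 * q ^ n)) (K * S2) GR) as Hfin.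
  assert (Hle : Cmod (Cminus (Cminus (g y) (g z)) (Cmult (Cminus y z) D)) <= K * S2).
  { apply Hfin; auto. intros n. rewrite Cmod_mult.
    pose proof (Rp_bound y z s n Hy1 Hz1) as HR. fold d in HR.
    pose proof (Hcoef n). pose proof (Cmod_ge_0 (a (S n))). pose proof (Cmod_ge_0 (Rp y z n)).
    assert (0 <= q ^ n) by (apply pow_le; lra). pose proof (pos_INR n).
    assert (Cmod (Rp y z n) <= (INR n + 1) ^ 2 * s ^ n * d ^ 2 / s).
    { apply Rmult_le_reg_r with s; auto. replace ((INR n + 1) ^ 2 * s ^ n * d ^ 2 / s * s) with
        ((INR n + 1) ^ 2 * s ^ n * d ^ 2) by (field; lra). auto. }
    unfold K. apply Rle_trans with (Cmod (a (S n)) * ((INR n + 1) ^ 2 * s ^ n * d ^ 2 / s)).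
    apply Rmult_le_compat_l; auto.
    replace (Cmod (a (S n)) * ((INR n + 1) ^ 2 * s ^ n * d ^ 2 / s)) with
      ((Cmod (a (S n)) * s ^ n) * ((INR n + 1) ^ 2 * d ^ 2 / s)) by (field; lra).
    replace (M / (rho * s) * d ^ 2 * ((INR n + 1) ^ 2 * q ^ n)) with
      ((M / rho * q ^ n) * ((INR n + 1) ^ 2 * d ^ 2 / s)) by (field; lra).
    apply Rmult_le_compat_r; auto.
    apply Rdiv_le_0_compat; [|lra]. apply Rmult_le_pos; apply pow_le; lra. }
  change (Cmod (Cminus (Cminus (g y) (g z)) (Cmult (Cminus y z) D)) <= eps * d).
  eapply Rle_trans; [exact Hle|].
  assert (K * S2 <= C0 * d ^ 2).
  { unfold K, C0. replace (M / (rho * s) * d ^ 2 * S2) with ((M / (rho * s) * S2) * d^2) by ring.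
    apply Rmult_le_compat_r. nra. apply Rle_abs. }
  assert (C0 * d ^ 2 <= eps * d) by nra.
  lra.
Qed.

Fixpoint fsum (f : nat -> C) (N : nat) : C :=
  match N with O => RtoC 0 | S n => Cplus (fsum f n) (f n) end.

Lemma Cconj_R (x : R) : Cconj (RtoC x) = RtoC x.
Proof. apply injective_projections; simpl; ring. Qed.

Definition om (N : nat) : C := (cos (2 * PI / INR N), sin (2 * PI / INR N)).

Lemma om_pow N n : Cpow (om N) n = (cos (INR n * (2 * PI / INR N)), sin (INR n * (2 * PI / INR N))).
Proof.
  induction n.
  - simpl. rewrite Rmult_0_l, cos_0, sin_0. reflexivity.
  - rewrite Cpow_S, IHn, S_INR. unfold om.
    apply injective_projections; simpl;
    rewrite Rmult_plus_distr_r, Rmult_1_l; [rewrite cos_plus | rewrite sin_plus]; ring.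
Qed.

Lemma om_conj_mult N : Cmult (om N) (Cconj (om N)) = RtoC 1.
Proof.
  unfold om. apply injective_projections; simpl.
  - pose proof (sin2_cos2 (2 * PI / INR N)). unfold Rsqr in H. lra.
  - ring.
Qed.

Lemma om_N N : (0 < N)%nat -> Cpow (om N) N = RtoC 1.
Proof.
  intros H. rewrite om_pow. replace (INR N * (2 * PI / INR N)) with (2 * PI).
  rewrite cos_2PI, sin_2PI. reflexivity.
  field. apply not_0_INR. lia.
Qed.

Lemma om_pow_ne1 N m : (0 < m < N)%nat -> Cpow (om N) m <> RtoC 1.
Proof.
  intros H E. rewrite om_pow in E. injection E as E1 E2.
  set (x := INR m * (2 * PI / INR N)) in *.
  assert (Hx : 0 < x / 2 < PI).
  { unfold x. assert (0 < INR m) by (apply lt_0_INR; lia).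
    assert (INR m < INR N) by (apply lt_INR; lia).
    pose proof PI_RGT_0.
    split. apply Rdiv_lt_0_compat; [|lra]. apply Rmult_lt_0_compat; auto.
    apply Rdiv_lt_0_compat; lra.
    replace (INR m * (2 * PI / INR N) / 2) with (PI * (INR m / INR N)) by (field; lra).
    replace PI with (PI * 1) at 2 by ring. apply Rmult_lt_compat_l; auto.
    apply (Rmult_lt_reg_r (INR N)); [lra|]. unfold Rdiv. rewrite Rmult_assoc, Rinv_l; lra. }
  pose proof (sin_gt_0 (x/2) (proj1 Hx) (proj2 Hx)).
  replace x with (2 * (x / 2)) in E1 by field. rewrite cos_2a_sin in E1. nra.
Qed.

Lemma fsum_geom (z : C) N : Cmult (Cminus z 1) (fsum (fun k => Cpow z k) N) = Cminus (Cpow z N) 1.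
Proof.
  induction N. simpl. ring.
  simpl fsum. rewrite Cmult_plus_distr_l, IHN. rewrite Cpow_S. ring.
Qed.

Lemma fsum_geom0 (z : C) N : Cpow z N = RtoC 1 -> z <> RtoC 1 -> fsum (fun k => Cpow z k) N = RtoC 0.
Proof.
  intros H1 H2. pose proof (fsum_geom z N). rewrite H1 in H.
  replace (Cminus 1 1) with (RtoC 0) in H by ring.
  assert (Hz : Cminus z 1 <> RtoC 0).
  { intros E. apply H2. replace z with (Cplus (Cminus z 1) 1) by ring. rewrite E. ring. }
  replace (fsum (fun k => Cpow z k) N) with (Cmult (Cinv (Cminus z 1)) (Cmult (Cminus z 1) (fsum (fun k => Cpow z k) N))).
  rewrite H. ring. field. auto.
Qed.

Lemma fsum_const (c : C) N : fsum (fun _ => c) N = Cmult (RtoC (INR N)) c.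
Proof.
  induction N. simpl. ring. simpl fsum. rewrite IHN, S_INR.
  replace (RtoC (INR N + 1)) with (Cplus (RtoC (INR N)) 1) by (apply injective_projections; simpl; ring). ring.
Qed.

Lemma om_sum N m : (0 < m < N)%nat -> fsum (fun k => Cpow (Cpow (om N) m) k) N = RtoC 0.
Proof.
  intros H. apply fsum_geom0. rewrite <- Cpow_mult_r, Nat.mul_comm, Cpow_mult_r, om_N by lia.
  apply Cpow_1_l. apply om_pow_ne1; auto.
Qed.

Lemma fsum_conj f N : fsum (fun k => Cconj (f k)) N = Cconj (fsum f N).
Proof. induction N. simpl. apply injective_projections; simpl; ring.
  simpl fsum. rewrite IHN, Cplus_conj. auto. Qed.

Lemma om_sum_conj N m : (0 < m < N)%nat -> fsum (fun k => Cpow (Cpow (Cconj (om N)) m) k) N = RtoC 0.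
Proof.
  intros H. transitivity (fsum (fun k => Cconj (Cpow (Cpow (om N) m) k)) N).
  - f_equal. apply functional_extensionality. intros k. rewrite !Cpow_conj. auto.
  - rewrite fsum_conj, om_sum; auto. apply injective_projections; simpl; ring.
Qed.

Lemma cser_zero : cser (fun _ => RtoC 0) (RtoC 0).
Proof.
  apply cser_spec. intros eps Heps. exists O. intros n _.
  assert (csum (fun _ => RtoC 0) n = RtoC 0).
  { induction n. rewrite csum_O. auto. rewrite csum_S, IHn. apply injective_projections; simpl; ring. }
  rewrite H. replace (Cminus 0 0) with (RtoC 0) by ring. rewrite Cmod_0. auto.
Qed.

Lemma cser_delta j (v : C) : cser (fun n => if Nat.eqb n j then v else RtoC 0) v.
Proof.
  apply cser_spec. intros eps Heps. exists j. intros n Hn.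
  assert (forall n, csum (fun n => if Nat.eqb n j then v else RtoC 0) n = if Nat.ltb n j then RtoC 0 else v).
  { clear. induction n.
    - rewrite csum_O. destruct j; simpl; auto.
    - rewrite csum_S, IHn. destruct (Nat.ltb n j) eqn:E1; destruct (Nat.eqb (S n) j) eqn:E2;
      destruct (Nat.ltb (S n) j) eqn:E3;
      apply Nat.ltb_lt in E1 || apply Nat.ltb_ge in E1;
      apply Nat.eqb_eq in E2 || apply Nat.eqb_neq in E2;
      apply Nat.ltb_lt in E3 || apply Nat.ltb_ge in E3;
      try lia; apply injective_projections; simpl; ring. }
  rewrite H. destruct (Nat.ltb n j) eqn:E. apply Nat.ltb_lt in E. lia.
  replace (Cminus v v) with (RtoC 0) by ring. rewrite Cmod_0. auto.
Qed.

Lemma fsum_cser (u : nat -> nat -> C) (U : nat -> C) N : (forall k, cser (u k) (U k)) ->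
  cser (fun n => fsum (fun k => u k n) N) (fsum U N).
Proof.
  intros H. induction N.
  - simpl. apply cser_zero.
  - simpl. apply cser_plus; auto.
Qed.

Lemma Cmod_fsum_le (f : nat -> C) b N : (forall k, Cmod (f k) <= b) -> Cmod (fsum f N) <= INR N * b.
Proof.
  intros H. induction N.
  - simpl. rewrite Cmod_0. lra.
  - simpl fsum. rewrite S_INR. eapply Rle_trans. apply Cmod_triangle. specialize (H N). lra.
Qed.

Lemma fsum_lin2 (a b : C) f g N : fsum (fun k => Cplus (Cmult a (f k)) (Cmult b (g k))) N =
  Cplus (Cmult a (fsum f N)) (Cmult b (fsum g N)).
Proof. induction N. simpl. ring. simpl fsum. rewrite IHN. ring. Qed.

Lemma pow_cancel (z x : C) a b : Cmult z x = RtoC 1 -> (b <= a)%nat ->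
  Cmult (Cpow z a) (Cpow x b) = Cpow z (a - b).
Proof.
  intros H Hb. replace a with ((a - b) + b)%nat at 1 by lia.
  rewrite Cpow_add_r. rewrite <- Cmult_assoc, <- Cpow_mult_l, H, Cpow_1_l. ring.
Qed.

Lemma Cmod_om N : Cmod (om N) = 1.
Proof.
  unfold Cmod, om. simpl. rewrite Rplus_comm. rewrite !Rmult_1_r.
  pose proof (sin2_cos2 (2 * PI / INR N)). unfold Rsqr in H. rewrite H. apply sqrt_1.
Qed.

Lemma sumA N n j : (n < N)%nat -> (j < N)%nat -> (0 < N)%nat ->
  fsum (fun k => Cpow (Cmult (Cpow (om N) n) (Cpow (Cconj (om N)) j)) k) N =
  if Nat.eqb n j then RtoC (INR N) else RtoC 0.
Proof.
  intros Hn Hj HN. destruct (Nat.eqb n j) eqn:E.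
  - apply Nat.eqb_eq in E. subst j.
    rewrite pow_cancel, Nat.sub_diag by (apply om_conj_mult || lia).
    simpl Cpow. transitivity (fsum (fun _ => RtoC 1) N).
    f_equal. apply functional_extensionality. intros; apply Cpow_1_l.
    rewrite fsum_const. ring.
  - apply Nat.eqb_neq in E. destruct (Compare_dec.le_lt_dec j n).
    + rewrite pow_cancel by (apply om_conj_mult || lia). apply om_sum. lia.
    + rewrite Cmult_comm, pow_cancel. apply om_sum_conj. lia.
      rewrite Cmult_comm. apply om_conj_mult. lia.
Qed.

Lemma sumB N n j : (n + j < N)%nat ->
  fsum (fun k => Cpow (Cmult (Cpow (Cconj (om N)) n) (Cpow (Cconj (om N)) j)) k) N =
  if Nat.eqb (n + j) 0 then RtoC (INR N) else RtoC 0.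
Proof.
  intros H. rewrite <- Cpow_add_r. destruct (Nat.eqb (n + j) 0) eqn:E.
  - apply Nat.eqb_eq in E. rewrite E. simpl Cpow.
    transitivity (fsum (fun _ => RtoC 1) N).
    f_equal. apply functional_extensionality. intros; apply Cpow_1_l.
    rewrite fsum_const. ring.
  - apply Nat.eqb_neq in E. apply om_sum_conj. lia.
Qed.

Definition Pf (c : nat -> C) (z : C) : C :=
  epsilon (inhabits (RtoC 0)) (fun P => cser (fun n => Cmult (c n) (Cpow z n)) P /\ 0 < Re P).

Definition ej (c : nat -> C) (r : R) (j : nat) : C :=
  if Nat.eqb j 0 then RtoC 1 else Cmult (RtoC (r ^ j)) (Cmult (c j) (RtoC (/2))).

Definition Sj (c : nat -> C) (r : R) (N j : nat) : C :=
  fsum (fun k => Cmult (RtoC (Re (Pf c (Cmult (RtoC r) (Cpow (om N) k))))) (Cpow (Cpow (Cconj (om N)) k) j)) N.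

Lemma RtoC_inv2 : RtoC (/ 2) = Cinv (RtoC 2).
Proof. apply injective_projections; simpl; field. Qed.

Lemma Cmod_zk r N k : 0 <= r -> Cmod (Cmult (RtoC r) (Cpow (om N) k)) = r.
Proof. intros. rewrite Cmod_mult, Cmod_pow, Cmod_om, pow1, Cmod_R, Rabs_pos_eq; lra. Qed.

Lemma g_expand (w cn : C) (r : R) k n j :
  Cmult (Cmult (Cpow (Cpow (Cconj w) k) j) (RtoC (/2)))
    (Cplus (Cmult cn (Cpow (Cmult (RtoC r) (Cpow w k)) n)) (Cconj (Cmult cn (Cpow (Cmult (RtoC r) (Cpow w k)) n))))
  = Cplus (Cmult (Cmult (Cmult cn (Cpow (RtoC r) n)) (RtoC (/2))) (Cpow (Cmult (Cpow w n) (Cpow (Cconj w) j)) k))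
          (Cmult (Cmult (Cmult (Cconj cn) (Cpow (RtoC r) n)) (RtoC (/2))) (Cpow (Cmult (Cpow (Cconj w) n) (Cpow (Cconj w) j)) k)).
Proof.
  rewrite !Cmult_conj, !Cpow_conj, Cmult_conj, Cconj_R, !Cpow_conj.
  rewrite !Cpow_mult_l. rewrite <- !Cpow_mult_r.
  replace (n * k)%nat with (k * n)%nat by lia. replace (j * k)%nat with (k * j)%nat by lia.
  ring.
Qed.

Lemma pow_le_one (u : R) n : 0 <= u <= 1 -> u ^ n <= 1.
Proof. intros Hu. induction n; simpl. lra. assert (0 <= u ^ n) by (apply pow_le; lra). nra. Qed.

Lemma pow_le_shift (u : R) a b : 0 <= u <= 1 -> (a <= b)%nat -> u ^ b <= u ^ a.
Proof.
  intros Hu Hab. replace b with (a + (b - a))%nat by lia. rewrite pow_add.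
  assert (0 <= u ^ a) by (apply pow_le; lra). assert (u ^ (b - a) <= 1) by (apply pow_le_one; lra).
  assert (0 <= u ^ (b - a)) by (apply pow_le; lra). nra.
Qed.

Lemma carath_N (c : nat -> C) (r : R) (N : nat) (M u : R) (j : nat) :
  c O = RtoC 1 ->
  (forall z, Cmod z < 1 -> z <> RtoC 0 -> exists P, cser (fun n => Cmult (c n) (Cpow z n)) P /\ 0 < Re P) ->
  0 < r < 1 -> (5 <= N)%nat -> (j <= 2)%nat -> 0 <= M -> 0 < u < 1 ->
  (forall n, Cmod (c n) * r ^ n <= M * (u ^ n * u ^ n)) ->
  Cmod (Cminus (Sj c r N j) (Cmult (RtoC (INR N)) (ej c r j)))
  <= INR N * (M * u ^ (N - 2)) * / (1 - u).
Proof.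
  intros c0 Hpos Hr HN Hj HM Hu Hcn.
  set (om' := om N).
  set (z := fun k => Cmult (RtoC r) (Cpow om' k)).
  set (X := fun k => Cpow (Cconj om') k).
  assert (HP : forall k, cser (fun n => Cmult (c n) (Cpow (z k) n)) (Pf c (z k)) /\ 0 < Re (Pf c (z k))).
  { intros k. unfold Pf. apply epsilon_spec. apply Hpos.
    - unfold z, om'. rewrite Cmod_zk; lra.
    - intros E. assert (Cmod (z k) = 0) by (rewrite E; apply Cmod_0).
      unfold z, om' in H. rewrite Cmod_zk in H; lra. }
  set (g := fun k n => Cmult (Cmult (Cpow (X k) j) (RtoC (/2)))
        (Cplus (Cmult (c n) (Cpow (z k) n)) (Cconj (Cmult (c n) (Cpow (z k) n))))).
  assert (Hg : forall k, cser (g k) (Cmult (RtoC (Re (Pf c (z k)))) (Cpow (X k) j))).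
  { intros k. destruct (HP k) as [H1 _].
    pose proof (cser_scal (Cmult (Cpow (X k) j) (RtoC (/2))) _ _ (cser_plus _ _ _ _ H1 (cser_conj _ _ H1))) as H2.
    replace (Cmult (RtoC (Re (Pf c (z k)))) (Cpow (X k) j)) with
      (Cmult (Cmult (Cpow (X k) j) (RtoC (/ 2))) (Cplus (Pf c (z k)) (Cconj (Pf c (z k))))).
    exact H2. rewrite re_alt, RtoC_inv2. field. }
  pose proof (fsum_cser g _ N Hg) as HS.
  pose proof (cser_minus _ _ _ _ HS (cser_delta j (Cmult (RtoC (INR N)) (ej c r j)))) as HD.
  assert (Hgeo : is_series (fun n => (INR N * (M * u ^ (N - 2))) * u ^ n) (INR N * (M * u ^ (N - 2)) * / (1 - u))).
  { assert (Hg0 : is_series (fun n => u ^ n) (/ (1 - u))) by (apply is_series_geom; rewrite Rabs_pos_eq; lra).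
    exact (is_series_scal_l (INR N * (M * u ^ (N - 2))) _ _ Hg0). }
  refine (cser_norm_le _ _ _ _ HD _ Hgeo).
  intros n. destruct (Compare_dec.lt_dec (n + 2) N) as [L|L].
  - assert (E : fsum (fun k => g k n) N = if Nat.eqb n j then Cmult (RtoC (INR N)) (ej c r j) else RtoC 0).
    { transitivity (fsum (fun k => Cplus (Cmult (Cmult (Cmult (c n) (Cpow (RtoC r) n)) (RtoC (/2))) (Cpow (Cmult (Cpow om' n) (Cpow (Cconj om') j)) k))
          (Cmult (Cmult (Cmult (Cconj (c n)) (Cpow (RtoC r) n)) (RtoC (/2))) (Cpow (Cmult (Cpow (Cconj om') n) (Cpow (Cconj om') j)) k))) N).
      { f_equal. apply functional_extensionality. intros k. unfold g, X, z. apply g_expand. }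
      rewrite fsum_lin2. unfold om'. rewrite sumA, sumB by lia.
      destruct (Nat.eqb n j) eqn:E1; destruct (Nat.eqb (n + j) 0) eqn:E2.
      - apply Nat.eqb_eq in E1. apply Nat.eqb_eq in E2. assert (n = 0)%nat by lia. assert (j = 0)%nat by lia.
        subst. unfold ej. simpl. rewrite c0. rewrite RtoC_inv2.
        replace (Cconj 1) with (RtoC 1) by (apply injective_projections; simpl; ring). field.
      - apply Nat.eqb_eq in E1. subst n. unfold ej. destruct (Nat.eqb j 0) eqn:E3.
        apply Nat.eqb_eq in E3. subst. simpl in E2. discriminate.
        rewrite <- RtoC_pow. ring.
      - apply Nat.eqb_neq in E1. apply Nat.eqb_eq in E2. lia.
      - ring. }
    rewrite E. destruct (Nat.eqb n j); replace (Cminus _ _) with (RtoC 0) by ring; rewrite Cmod_0;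
      apply Rmult_le_pos; [| apply pow_le; lra| |apply pow_le; lra];
      apply Rmult_le_pos; try apply pos_INR; apply Rmult_le_pos; auto; apply pow_le; lra.
  - assert (Ed : Nat.eqb n j = false) by (apply Nat.eqb_neq; lia). rewrite Ed.
    replace (Cminus (fsum (fun k => g k n) N) (RtoC 0)) with (fsum (fun k => g k n) N) by ring.
    eapply Rle_trans. apply Cmod_fsum_le with (b := Cmod (c n) * r ^ n).
    + intros k. unfold g. rewrite Cmod_mult, Cmod_mult, Cmod_pow, Cmod_R. unfold X.
      rewrite Cmod_pow, Cmod_conj. unfold om'. rewrite Cmod_om, !pow1, Rabs_pos_eq by lra.
      eapply Rle_trans. apply Rmult_le_compat_l. lra. apply Cmod_triangle.
      rewrite Cmod_conj, Cmod_mult, Cmod_pow. unfold z, om'. rewrite Cmod_zk by lra. lra.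
    + pose proof (Hcn n). assert (u ^ n <= u ^ (N - 2)) by (apply pow_le_shift; lra || lia).
      assert (0 <= u ^ n) by (apply pow_le; lra). pose proof (pos_INR N).
      assert (M * (u ^ n * u ^ n) <= M * u ^ (N - 2) * u ^ n).
      { rewrite <- Rmult_assoc. apply Rmult_le_compat_r; auto. apply Rmult_le_compat_l; auto. }
      rewrite Rmult_assoc. apply Rmult_le_compat_l; auto. lra.
Qed.

Definition Ew (w : nat -> R) (X : nat -> C) j N := fsum (fun k => Cmult (RtoC (w k)) (Cpow (X k) j)) N.

Lemma fsum_S f N : fsum f (S N) = Cplus (fsum f N) (f N).
Proof. reflexivity. Qed.

Lemma F_gen (w : nat -> R) (X : nat -> C) (m : C) N :
  (forall k, 0 <= w k) -> (forall k, Cmult (X k) (Cconj (X k)) = RtoC 1) ->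
  Cmod (Cplus (Cminus (Ew w X 2 N) (Cmult (Cmult 2 m) (Ew w X 1 N))) (Cmult (Cmult m m) (Ew w X 0 N)))
  <= Re (Cminus (Cminus (Cmult (Cplus 1 (Cmult m (Cconj m))) (Ew w X 0 N)) (Cmult m (Cconj (Ew w X 1 N))))
           (Cmult (Cconj m) (Ew w X 1 N))).
Proof.
  intros Hw HX. induction N.
  - unfold Ew. simpl.
    replace (Cplus (Cminus 0 (Cmult (Cmult 2 m) 0)) (Cmult (Cmult m m) 0)) with (RtoC 0) by ring.
    rewrite Cmod_0.
    replace (Cminus (Cminus (Cmult (Cplus 1 (Cmult m (Cconj m))) 0) (Cmult m (Cconj 0))) (Cmult (Cconj m) 0))
      with (RtoC 0). simpl; lra.
    replace (Cconj 0) with (RtoC 0) by (apply injective_projections; simpl; ring). ring.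
  - unfold Ew in *. rewrite !fsum_S. cbv beta. set (x := X N). set (wN := w N).
    set (E0 := fsum (fun k => Cmult (RtoC (w k)) (Cpow (X k) 0)) N) in *.
    set (E1 := fsum (fun k => Cmult (RtoC (w k)) (Cpow (X k) 1)) N) in *.
    set (E2 := fsum (fun k => Cmult (RtoC (w k)) (Cpow (X k) 2)) N) in *.
    replace (Cplus (Cminus (Cplus E2 (Cmult (RtoC wN) (Cpow x 2))) (Cmult (Cmult 2 m) (Cplus E1 (Cmult (RtoC wN) (Cpow x 1)))))
      (Cmult (Cmult m m) (Cplus E0 (Cmult (RtoC wN) (Cpow x 0)))))
      with (Cplus (Cplus (Cminus E2 (Cmult (Cmult 2 m) E1)) (Cmult (Cmult m m) E0))
                  (Cmult (RtoC wN) (Cmult (Cminus x m) (Cminus x m)))) by (simpl; ring).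
    rewrite Cplus_conj.
    assert (Hx : Cmult x (Cconj x) = RtoC 1) by apply HX.
    replace (Cminus (Cminus (Cmult (Cplus 1 (Cmult m (Cconj m))) (Cplus E0 (Cmult (RtoC wN) (Cpow x 0))))
       (Cmult m (Cplus (Cconj E1) (Cconj (Cmult (RtoC wN) (Cpow x 1)))))) (Cmult (Cconj m) (Cplus E1 (Cmult (RtoC wN) (Cpow x 1)))))
      with (Cplus (Cminus (Cminus (Cmult (Cplus 1 (Cmult m (Cconj m))) E0) (Cmult m (Cconj E1))) (Cmult (Cconj m) E1))
                  (Cmult (RtoC wN) (Cmult (Cminus x m) (Cconj (Cminus x m))))).
    2:{ rewrite Cminus_conj, Cmult_conj, Cconj_R. simpl Cpow.
        replace (Cconj (Cmult x 1)) with (Cconj x) by (rewrite Cmult_1_r; auto).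
        match goal with |- ?A = ?B => assert (D : Cminus A B = Cmult (RtoC wN) (Cminus (Cmult x (Cconj x)) 1)) by ring end.
        rewrite Hx in D. replace (Cmult (RtoC wN) (Cminus 1 1)) with (RtoC 0) in D by ring.
        match goal with |- ?A = ?B => replace A with (Cplus (Cminus A B) B) by ring end. rewrite D. ring. }
    rewrite re_plus. eapply Rle_trans. apply Cmod_triangle.
    apply Rplus_le_compat. exact IHN.
    rewrite <- Cmod2_conj. rewrite Cmod_mult, Cmod_mult, Cmod_R, Rabs_pos_eq by apply Hw.
    rewrite <- RtoC_mult, re_RtoC. unfold wN. right. ring.
Qed.

Lemma Cmod_sub_le (a b : C) : Cmod a - Cmod b <= Cmod (Cplus a b).
Proof.
  pose proof (Cmod_triangle (Cplus a b) (Copp b)). rewrite Cmod_opp in H.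
  replace (Cplus (Cplus a b) (Copp b)) with a in H by ring. lra.
Qed.

Lemma mconj (m : C) : Cmult m (Cconj m) = RtoC (Cmod m ^ 2).
Proof. rewrite Cmod2_conj. auto. Qed.

Lemma perturb (N : R) (m e2 S0 S1 S2 : C) (eps : R) : 0 < N ->
  Cmod (Cminus S0 (Cmult (RtoC N) 1)) <= N * eps ->
  Cmod (Cminus S1 (Cmult (RtoC N) m)) <= N * eps ->
  Cmod (Cminus S2 (Cmult (RtoC N) e2)) <= N * eps ->
  Cmod (Cplus (Cminus S2 (Cmult (Cmult 2 m) S1)) (Cmult (Cmult m m) S0))
  <= Re (Cminus (Cminus (Cmult (Cplus 1 (Cmult m (Cconj m))) S0) (Cmult m (Cconj S1))) (Cmult (Cconj m) S1)) ->
  Cmod (Cminus e2 (Cmult m m)) <= 1 - Cmod m ^ 2 + 2 * eps * (1 + Cmod m) ^ 2.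
Proof.
  intros HN H0 H1 H2 HF.
  set (E0 := Cminus S0 (Cmult (RtoC N) 1)) in *.
  set (E1 := Cminus S1 (Cmult (RtoC N) m)) in *.
  set (E2 := Cminus S2 (Cmult (RtoC N) e2)) in *.
  assert (Heps : 0 <= eps). { pose proof (Cmod_ge_0 E0). nra. }
  replace S0 with (Cplus (Cmult (RtoC N) 1) E0) in HF by (unfold E0; ring).
  replace S1 with (Cplus (Cmult (RtoC N) m) E1) in HF by (unfold E1; ring).
  replace S2 with (Cplus (Cmult (RtoC N) e2) E2) in HF by (unfold E2; ring).
  set (R1 := Cplus (Cminus E2 (Cmult (Cmult 2 m) E1)) (Cmult (Cmult m m) E0)).
  set (R2 := Cminus (Cminus (Cmult (Cplus 1 (Cmult m (Cconj m))) E0) (Cmult m (Cconj E1))) (Cmult (Cconj m) E1)).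
  replace (Cplus (Cminus (Cplus (Cmult (RtoC N) e2) E2) (Cmult (Cmult 2 m) (Cplus (Cmult (RtoC N) m) E1)))
          (Cmult (Cmult m m) (Cplus (Cmult (RtoC N) 1) E0)))
    with (Cplus (Cmult (RtoC N) (Cminus e2 (Cmult m m))) R1) in HF by (unfold R1; ring).
  rewrite Cplus_conj, Cmult_conj, Cconj_R in HF.
  replace (Cminus (Cminus (Cmult (Cplus 1 (Cmult m (Cconj m))) (Cplus (Cmult (RtoC N) 1) E0))
                  (Cmult m (Cplus (Cmult (RtoC N) (Cconj m)) (Cconj E1))))
                  (Cmult (Cconj m) (Cplus (Cmult (RtoC N) m) E1)))
    with (Cplus (RtoC (N * (1 - Cmod m ^ 2))) R2) in HF.
  2:{ unfold R2. rewrite RtoC_mult, RtoC_minus, <- mconj. ring. }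
  rewrite re_plus, re_RtoC in HF.
  pose proof (Cmod_sub_le (Cmult (RtoC N) (Cminus e2 (Cmult m m))) R1) as T1.
  rewrite Cmod_mult, Cmod_R, Rabs_pos_eq in T1 by lra.
  pose proof (re_le_Cmod R2) as T2. apply Rabs_le_between in T2 as [_ T2].
  assert (B1 : Cmod R1 <= Cmod E2 + 2 * Cmod m * Cmod E1 + Cmod m ^ 2 * Cmod E0).
  { unfold R1. eapply Rle_trans. apply Cmod_triangle.
    unfold Cminus. rewrite !Cmod_mult. eapply Rle_trans. apply Rplus_le_compat_r. apply Cmod_triangle.
    rewrite Cmod_opp, !Cmod_mult. rewrite Cmod_R, Rabs_pos_eq by lra. right. simpl. ring. }
  assert (B2 : Cmod R2 <= (1 + Cmod m ^ 2) * Cmod E0 + 2 * Cmod m * Cmod E1).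
  { unfold R2. unfold Cminus. eapply Rle_trans. apply Cmod_triangle.
    eapply Rle_trans. apply Rplus_le_compat_r. apply Cmod_triangle.
    rewrite !Cmod_opp, !Cmod_mult, Cmod_conj, Cmod_conj.
    rewrite mconj. 
    assert (Cmod (Cplus 1 (RtoC (Cmod m ^ 2))) <= 1 + Cmod m ^ 2).
    { rewrite <- RtoC_plus, Cmod_R, Rabs_pos_eq. lra. pose proof (pow2_ge_0 (Cmod m)). lra. }
    pose proof (Cmod_ge_0 E0). nra. }
  pose proof (Cmod_ge_0 m). pose proof (Cmod_ge_0 E0). pose proof (Cmod_ge_0 E1). pose proof (Cmod_ge_0 E2).
  assert (Q1 : Cmod m * Cmod E1 <= Cmod m * (N * eps)) by (apply Rmult_le_compat_l; auto).
  assert (Q2 : Cmod m ^ 2 * Cmod E0 <= Cmod m ^ 2 * (N * eps)) by (apply Rmult_le_compat_l; auto; apply pow2_ge_0).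
  assert (Hfin : N * Cmod (Cminus e2 (Cmult m m)) <= N * (1 - Cmod m ^ 2 + 2 * eps * (1 + Cmod m) ^ 2)).
  { nra. }
  apply Rmult_le_reg_l in Hfin; auto.
Qed.

Lemma carath_r (c : nat -> C) (r : R) :
  c O = RtoC 1 ->
  (forall z, Cmod z < 1 -> z <> RtoC 0 -> exists P, cser (fun n => Cmult (c n) (Cpow z n)) P /\ 0 < Re P) ->
  0 < r < 1 ->
  Cmod (Cminus (ej c r 2) (Cmult (ej c r 1) (ej c r 1))) <= 1 - Cmod (ej c r 1) ^ 2.
Proof.
  intros c0 Hpos Hr.
  set (rho := (r + 1) / 2).
  assert (Hrho : r < rho < 1) by (unfold rho; lra).
  destruct (Hpos (RtoC rho)) as [Prho [Hrs _]].
  { rewrite Cmod_R, Rabs_pos_eq; lra. }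
  { intros E. injection E. lra. }
  destruct (cser_bounded _ _ Hrs) as [M HM].
  assert (HM0 : 0 <= M) by (eapply Rle_trans; [apply Cmod_ge_0 | apply (HM O)]).
  set (t := r / rho). assert (Ht : 0 < t < 1).
  { unfold t. split. apply Rdiv_lt_0_compat; lra. apply (Rmult_lt_reg_r rho); [lra|].
    unfold Rdiv. rewrite Rmult_assoc, Rinv_l, Rmult_1_r; lra. }
  set (u := sqrt t).
  assert (Huu : u * u = t) by (apply sqrt_sqrt; lra).
  assert (Hu : 0 < u < 1).
  { split. apply sqrt_lt_R0; lra. unfold u. rewrite <- sqrt_1. apply sqrt_lt_1; lra. }
  assert (Hcn : forall n, Cmod (c n) * r ^ n <= M * (u ^ n * u ^ n)).
  { intros n. specialize (HM n). rewrite Cmod_mult, Cmod_pow, Cmod_R, Rabs_pos_eq in HM by lra.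
    rewrite <- Rpow_mult_distr, Huu.
    replace r with (t * rho) by (unfold t; field; lra). rewrite Rpow_mult_distr.
    assert (0 <= t ^ n) by (apply pow_le; lra).
    replace (Cmod (c n) * (t ^ n * rho ^ n)) with (t ^ n * (Cmod (c n) * rho ^ n)) by ring.
    rewrite (Rmult_comm M). apply Rmult_le_compat_l; auto. }
  set (m := ej c r 1). set (e2 := ej c r 2).
  assert (Hall : forall N, (5 <= N)%nat ->
     Cmod (Cminus e2 (Cmult m m)) <= 1 - Cmod m ^ 2 + 2 * (M * u ^ (N - 2) * / (1 - u)) * (1 + Cmod m) ^ 2).
  { intros N HN.
    assert (HNp : 0 < INR N) by (apply lt_0_INR; lia).
    pose proof (carath_N c r N M u 0 c0 Hpos Hr HN ltac:(lia) HM0 Hu Hcn) as B0.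
    pose proof (carath_N c r N M u 1 c0 Hpos Hr HN ltac:(lia) HM0 Hu Hcn) as B1.
    pose proof (carath_N c r N M u 2 c0 Hpos Hr HN ltac:(lia) HM0 Hu Hcn) as B2.
    set (w := fun k => Re (Pf c (Cmult (RtoC r) (Cpow (om N) k)))).
    set (X := fun k => Cpow (Cconj (om N)) k).
    assert (Hw : forall k, 0 <= w k).
    { intros k. unfold w, Pf. apply Rlt_le.
      assert (Hz1 : Cmod (Cmult (RtoC r) (Cpow (om N) k)) < 1) by (rewrite Cmod_zk; lra).
      assert (Hz2 : Cmult (RtoC r) (Cpow (om N) k) <> RtoC 0).
      { intros E. assert (Cmod (Cmult (RtoC r) (Cpow (om N) k)) = 0) by (rewrite E; apply Cmod_0).
        rewrite Cmod_zk in H; lra. }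
      pose proof (epsilon_spec (inhabits (RtoC 0)) (fun P => cser (fun n => Cmult (c n) (Cpow (Cmult (RtoC r) (Cpow (om N) k)) n)) P /\ 0 < Re P) (Hpos _ Hz1 Hz2)) as HE.
      exact (proj2 HE). }
    assert (HX : forall k, Cmult (X k) (Cconj (X k)) = RtoC 1).
    { intros k. unfold X. rewrite Cpow_conj, Cconj_conj, <- Cpow_mult_l, Cmult_comm, om_conj_mult.
      apply Cpow_1_l. }
    pose proof (F_gen w X m N Hw HX) as HF.
    apply (perturb (INR N) m e2 (Sj c r N 0) (Sj c r N 1) (Sj c r N 2) (M * u ^ (N - 2) * / (1 - u)) HNp).
    - eapply Rle_trans; [exact B0|]. right. ring.
    - eapply Rle_trans; [exact B1|]. right. ring.
    - eapply Rle_trans; [exact B2|]. right. ring.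
    - exact HF. }
  destruct (Rle_lt_dec (Cmod (Cminus e2 (Cmult m m))) (1 - Cmod m ^ 2)) as [L|L]; auto.
  exfalso.
  set (delta := Cmod (Cminus e2 (Cmult m m)) - (1 - Cmod m ^ 2)).
  set (K := 2 * (M + 1) * / (1 - u) * (1 + Cmod m) ^ 2).
  assert (HK : 0 < K).
  { unfold K. pose proof (Cmod_ge_0 m). apply Rmult_lt_0_compat. apply Rmult_lt_0_compat.
    lra. apply Rinv_0_lt_compat; lra. apply pow_lt; lra. }
  destruct (pow_lt_1_zero u ltac:(rewrite Rabs_pos_eq; lra) (delta / K) ltac:(apply Rdiv_lt_0_compat; unfold delta; lra))
    as [N0 HN0].
  specialize (Hall (N0 + 5)%nat ltac:(lia)). specialize (HN0 (N0 + 5 - 2)%nat ltac:(lia)).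
  rewrite Rabs_pos_eq in HN0 by (apply pow_le; lra).
  set (v := u ^ (N0 + 5 - 2)) in *.
  assert (0 <= v) by (apply pow_le; lra).
  assert (K * v < delta).
  { apply (Rmult_lt_compat_l K) in HN0; auto. replace (K * (delta / K)) with delta in HN0 by (field; lra). auto. }
  assert (2 * (M * v * / (1 - u)) * (1 + Cmod m) ^ 2 <= K * v).
  { unfold K. assert (0 < / (1 - u)) by (apply Rinv_0_lt_compat; lra).
    pose proof (Cmod_ge_0 m). assert (0 <= (1 + Cmod m) ^ 2) by (apply pow_le; lra).
    assert (0 <= v * / (1 - u) * (1 + Cmod m) ^ 2) by (apply Rmult_le_pos; [apply Rmult_le_pos|]; lra).
    nra. }
  unfold delta in *. lra.
Qed.

Lemma carath (c : nat -> C) :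
  c O = RtoC 1 ->
  (forall z, Cmod z < 1 -> z <> RtoC 0 -> exists P, cser (fun n => Cmult (c n) (Cpow z n)) P /\ 0 < Re P) ->
  Cmod (Cminus (Cmult (c 2%nat) (RtoC (/2))) (Cmult (Cmult (c 1%nat) (c 1%nat)) (RtoC (/4)))) + Cmod (c 1%nat) ^ 2 / 4 <= 1.
Proof.
  intros c0 Hpos.
  set (X := Cmod (Cminus (Cmult (c 2%nat) (RtoC (/2))) (Cmult (Cmult (c 1%nat) (c 1%nat)) (RtoC (/4))))).
  set (A := X + Cmod (c 1%nat) ^ 2 / 4).
  assert (Hr : forall r, 0 < r < 1 -> r ^ 2 * A <= 1).
  { intros r Hr. pose proof (carath_r c r c0 Hpos Hr) as H. unfold ej in H. simpl Nat.eqb in H. cbv iota in H.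
    replace (Cminus (Cmult (RtoC (r ^ 2)) (Cmult (c 2%nat) (RtoC (/ 2))))
              (Cmult (Cmult (RtoC (r ^ 1)) (Cmult (c 1%nat) (RtoC (/ 2)))) (Cmult (RtoC (r ^ 1)) (Cmult (c 1%nat) (RtoC (/ 2))))))
      with (Cmult (RtoC (r ^ 2)) (Cminus (Cmult (c 2%nat) (RtoC (/2))) (Cmult (Cmult (c 1%nat) (c 1%nat)) (RtoC (/4))))) in H.
    2:{ rewrite !RtoC_pow. replace (RtoC (/4)) with (Cmult (RtoC (/2)) (RtoC (/2))). ring.
        rewrite <- RtoC_mult. f_equal. field. }
    rewrite !Cmod_mult, !Cmod_R, Rabs_pos_eq in H by (apply pow_le; lra).
    rewrite Rabs_pos_eq in H by lra. rewrite Rabs_pos_eq in H by lra.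
    fold X in H. unfold A. simpl pow in *. nra. }
  destruct (Rle_lt_dec A 1) as [L|L]; auto. exfalso.
  set (r := sqrt ((1 + / A) / 2)).
  assert (HA : 0 < / A < 1). { split. apply Rinv_0_lt_compat; lra. rewrite <- Rinv_1. apply Rinv_lt_contravar; lra. }
  assert (Hr2 : r * r = (1 + / A) / 2) by (apply sqrt_sqrt; lra).
  assert (0 < r < 1).
  { split. apply sqrt_lt_R0; lra. unfold r. apply Rlt_le_trans with (sqrt 1). apply sqrt_lt_1; lra. rewrite sqrt_1; lra. }
  specialize (Hr r H). simpl pow in Hr. rewrite Rmult_1_r, Hr2 in Hr.
  assert ((1 + / A) / 2 * A = (A + 1) / 2) by (field; lra). lra.
Qed.

Lemma deriv_uniq (f : C -> C) z d1 d2 :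
  is_derive (K:=C_AbsRing) (V:=C_NormedModule) f z d1 ->
  is_derive (K:=C_AbsRing) (V:=C_NormedModule) f z d2 -> d1 = d2.
Proof.
  intros H1 H2. apply is_C_derive_unique in H1. apply is_C_derive_unique in H2. congruence.
Qed.

Lemma cser_at0 (a : nat -> C) : cser (fun n => Cmult (a n) (Cpow (RtoC 0) n)) (a O).
Proof.
  apply cser_ext with (fun n => if Nat.eqb n 0 then a O else RtoC 0).
  - intros [|n]; simpl. ring. ring.
  - apply cser_delta.
Qed.

Lemma val_at0 (a : nat -> C) l : cser (fun n => Cmult (a n) (Cpow (RtoC 0) n)) l -> l = a O.
Proof. intros H. exact (cser_unique _ _ _ H (cser_at0 a)). Qed.

Lemma div_series (a : nat -> C) (F z : C) : a O = RtoC 0 -> z <> RtoC 0 ->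
  cser (fun n => Cmult (a n) (Cpow z n)) F ->
  cser (fun n => Cmult (a (S n)) (Cpow z n)) (Cdiv F z).
Proof.
  intros a0 Hz H. pose proof (cser_scal (Cinv z) _ _ (cser_shift _ _ H)) as H1.
  cbv beta in H1. rewrite a0 in H1. replace (Cmult (Cinv z) (Cminus F (Cmult 0 (Cpow z 0)))) with (Cdiv F z) in H1
    by (unfold Cdiv; ring).
  apply cser_ext with (2 := H1). intros n. rewrite Cpow_S. field. auto.
Qed.

Lemma p_series (beta : R) (a : nat -> C) (F D z : C) : a O = RtoC 0 -> z <> RtoC 0 ->
  cser (fun n => Cmult (a n) (Cpow z n)) F ->
  cser (fun n => Cmult (dser a n) (Cpow z n)) D ->
  cser (fun n => Cmult (Cmult (RtoC (INR (S n) - INR n * beta)) (a (S n))) (Cpow z n))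
       (Cplus (Cmult (RtoC beta) (Cdiv F z)) (Cmult (RtoC (1 - beta)) D)).
Proof.
  intros a0 Hz HF HD.
  pose proof (cser_plus _ _ _ _ (cser_scal (RtoC beta) _ _ (div_series a F z a0 Hz HF)) (cser_scal (RtoC (1 - beta)) _ _ HD)) as H.
  apply cser_ext with (2 := H). intros n. unfold dser. rewrite S_INR.
  rewrite !RtoC_minus, !RtoC_plus, !RtoC_mult. ring.
Qed.

Lemma real_ineq beta x dd : 0 <= beta <= 1 -> 0 <= x -> 0 <= dd -> dd + x ^ 2 / 4 <= 1 ->
  2 / (3 - 2 * beta) * dd + (2 / (2 - beta) ^ 2 - 1 / (2 * (3 - 2 * beta))) * x ^ 2
  <= 2 * (8 - 4 * beta - beta ^ 2) / ((2 - beta) ^ 2 * (3 - 2 * beta)).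
Proof.
  intros Hb Hx Hd H.
  assert (Hp : 0 < (2 - beta) ^ 2 * (3 - 2 * beta)) by (apply Rmult_lt_0_compat; [apply pow_lt|]; lra).
  apply (Rmult_le_reg_r ((2 - beta) ^ 2 * (3 - 2 * beta))); auto.
  replace ((2 / (3 - 2 * beta) * dd + (2 / (2 - beta) ^ 2 - 1 / (2 * (3 - 2 * beta))) * x ^ 2) * ((2 - beta) ^ 2 * (3 - 2 * beta)))
    with (2 * (2 - beta) ^ 2 * dd + (2 * (3 - 2 * beta) - (2 - beta) ^ 2 / 2) * x ^ 2) by (field; lra).
  replace (2 * (8 - 4 * beta - beta ^ 2) / ((2 - beta) ^ 2 * (3 - 2 * beta)) * ((2 - beta) ^ 2 * (3 - 2 * beta)))
    with (2 * (8 - 4 * beta - beta ^ 2)) by (field; lra).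
  assert (H1 : (2 - beta) ^ 2 * (dd - (1 - x ^ 2 / 4)) <= 0).
  { assert (0 <= (2 - beta) ^ 2) by (apply pow_le; lra). nra. }
  assert (H2 : (2 - beta ^ 2) * (x ^ 2 - 4) <= 0).
  { assert (x ^ 2 <= 4) by (pose proof (pow2_ge_0 x); lra).
    assert (0 <= 2 - beta ^ 2) by (simpl; nra).
    assert (0 <= (2 - beta ^ 2) * (4 - x ^ 2)) by (apply Rmult_le_pos; lra). lra. }
  nra.
Qed.

Lemma upper (beta : R) (hb0 : 0 <= beta) (hb1 : beta <= 1) (f : C -> C) (a : nat -> C) :
  classA_beta beta f -> taylor_on_disk f a ->
  Cmod (invA2 a) <= 2 / (2 - beta) /\
  Cmod (invA3 a) <= 2 * (8 - 4 * beta - beta ^ 2) / ((2 - beta) ^ 2 * (3 - 2 * beta)).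
Proof.
  intros [[Hd [Hf0 Hf'0]] Hpos] Ht.
  assert (HT : forall z, Cmod z < 1 -> cser (fun n => Cmult (a n) (Cpow z n)) (f z)).
  { intros z Hz. apply pser_cser. apply Ht. exact Hz. }
  assert (a0 : a O = RtoC 0).
  { assert (H0 : Cmod (RtoC 0) < 1) by (rewrite Cmod_0; lra).
    pose proof (val_at0 a _ (HT _ H0)). rewrite <- H, Hf0. auto. }
  pose proof (pser_deriv a f HT) as HDer.
  assert (a1 : a 1%nat = RtoC 1).
  { assert (H0 : Cmod (RtoC 0) < 1) by (rewrite Cmod_0; lra).
    destruct (HDer _ H0) as [D0 [HD0 HdD0]].
    pose proof (val_at0 _ _ HD0) as E. pose proof (deriv_uniq _ _ _ _ HdD0 Hf'0) as E2.
    rewrite E2 in E. unfold dser in E. simpl INR in E.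
    replace (a 1%nat) with (Cmult (RtoC 1) (a 1%nat)) by ring. rewrite <- E. auto. }
  set (c := fun n => Cmult (RtoC (INR (S n) - INR n * beta)) (a (S n))).
  assert (c0 : c O = RtoC 1).
  { unfold c. rewrite a1. simpl INR. apply injective_projections; simpl; ring. }
  assert (Hpc : forall z, Cmod z < 1 -> z <> RtoC 0 -> exists P, cser (fun n => Cmult (c n) (Cpow z n)) P /\ 0 < Re P).
  { intros z Hz Hz0. destruct (HDer z Hz) as [D [HD HdD]].
    exists (Cplus (Cmult (RtoC beta) (Cdiv (f z) z)) (Cmult (RtoC (1 - beta)) D)). split.
    - apply (p_series beta a (f z) D z a0 Hz0 (HT z Hz) HD).
    - apply Hpos; auto. }
  pose proof (carath c c0 Hpc) as HC.
  assert (Ha2 : a 2%nat = Cmult (RtoC (/ (2 - beta))) (c 1%nat)).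
  { unfold c. rewrite Cmult_assoc, <- RtoC_mult.
    replace (/ (2 - beta) * (INR 2 - INR 1 * beta)) with 1 by (simpl; field; lra). ring. }
  assert (Ha3 : a 3%nat = Cmult (RtoC (/ (3 - 2 * beta))) (c 2%nat)).
  { unfold c. rewrite Cmult_assoc, <- RtoC_mult.
    replace (/ (3 - 2 * beta) * (INR 3 - INR 2 * beta)) with 1 by (simpl; field; lra). ring. }
  set (x := Cmod (c 1%nat)) in *.
  set (dd := Cmod (Cminus (Cmult (c 2%nat) (RtoC (/ 2))) (Cmult (Cmult (c 1%nat) (c 1%nat)) (RtoC (/ 4))))) in *.
  assert (Hx : 0 <= x) by apply Cmod_ge_0. assert (Hdd : 0 <= dd) by apply Cmod_ge_0.
  split.
  - unfold invA2. rewrite Ha2, Cmod_opp, Cmod_mult, Cmod_R, Rabs_pos_eq.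
    2:{ apply Rlt_le, Rinv_0_lt_compat; lra. }
    fold x. assert (x <= 2) by nra. unfold Rdiv. rewrite Rmult_comm. apply Rmult_le_compat_r; auto.
    apply Rlt_le, Rinv_0_lt_compat; lra.
  - unfold invA3. rewrite Ha2, Ha3.
    set (kap := 2 / (2 - beta) ^ 2 - 1 / (2 * (3 - 2 * beta))).
    replace (Cplus (Copp (Cmult (RtoC (/ (3 - 2 * beta))) (c 2%nat)))
       (Cmult (RtoC 2) (Cmult (Cmult (RtoC (/ (2 - beta))) (c 1%nat)) (Cmult (RtoC (/ (2 - beta))) (c 1%nat)))))
      with (Cplus (Cmult (RtoC (- (2 / (3 - 2 * beta)))) (Cminus (Cmult (c 2%nat) (RtoC (/ 2))) (Cmult (Cmult (c 1%nat) (c 1%nat)) (RtoC (/ 4)))))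
                  (Cmult (RtoC kap) (Cmult (c 1%nat) (c 1%nat)))).
    2:{ unfold kap. destruct (c 1%nat) as [x1 y1]. destruct (c 2%nat) as [x2 y2].
        apply injective_projections; simpl; field; lra. }
    eapply Rle_trans. apply Cmod_triangle.
    rewrite !Cmod_mult, !Cmod_R. fold dd. fold x.
    rewrite Rabs_Ropp, Rabs_pos_eq by (apply Rlt_le, Rdiv_lt_0_compat; lra).
    assert (Hk : 0 <= kap).
    { unfold kap. assert (0 < 2 - beta) by lra. assert (0 < 3 - 2 * beta) by lra.
      assert (2 / (2 - beta) ^ 2 - 1 / (2 * (3 - 2 * beta)) = (8 - 4 * beta - beta ^ 2) / (2 * (2 - beta) ^ 2 * (3 - 2 * beta))) by (field; lra).
      rewrite H1. apply Rdiv_le_0_compat. simpl; nra. apply Rmult_lt_0_compat; [apply Rmult_lt_0_compat; [lra| apply pow_lt; lra]|lra]. }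
    rewrite Rabs_pos_eq by auto.
    replace (kap * (x * x)) with (kap * x ^ 2) by ring.
    apply real_ineq; auto. 
Qed.

Definition aE (beta : R) (n : nat) : C :=
  match n with O => RtoC 0 | S O => RtoC 1 | S n' => RtoC (2 / (INR (S n') - INR n' * beta)) end.

Definition fE (beta : R) (z : C) : C :=
  epsilon (inhabits (RtoC 0)) (fun l => cser (fun n => Cmult (aE beta n) (Cpow z n)) l).

Lemma den_ge1 beta k : 0 <= beta <= 1 -> 1 <= INR (S k) - INR k * beta.
Proof. intros Hb. rewrite S_INR. pose proof (pos_INR k). nra. Qed.

Lemma aE_bound beta n : 0 <= beta <= 1 -> Cmod (aE beta n) <= 2.
Proof.
  intros Hb. destruct n as [|[|n]].
  - simpl aE. rewrite Cmod_0; lra.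
  - simpl aE. rewrite Cmod_1; lra.
  - change (aE beta (S (S n))) with (RtoC (2 / (INR (S (S n)) - INR (S n) * beta))). rewrite Cmod_R. pose proof (den_ge1 beta (S n) Hb).
    rewrite Rabs_pos_eq by (apply Rdiv_le_0_compat; lra).
    apply (Rmult_le_reg_r (INR (S (S n)) - INR (S n) * beta)); [lra|].
    unfold Rdiv. rewrite Rmult_assoc, Rinv_l by lra. nra.
Qed.

Lemma fE_ser beta z : 0 <= beta <= 1 -> Cmod z < 1 -> cser (fun n => Cmult (aE beta n) (Cpow z n)) (fE beta z).
Proof.
  intros Hb Hz. unfold fE. apply epsilon_spec.
  apply cser_exists with (fun n => 2 * Cmod z ^ n).
  - intros n. rewrite Cmod_mult, Cmod_pow. pose proof (aE_bound beta n Hb).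
    assert (0 <= Cmod z ^ n) by (apply pow_le, Cmod_ge_0). nra.
  - apply (ex_series_scal_l 2 (fun n => Cmod z ^ n)). apply ex_series_geom.
    rewrite Rabs_pos_eq; auto. apply Cmod_ge_0.
Qed.

Lemma geom_C z : Cmod z < 1 -> cser (fun n => Cpow z n) (Cinv (Cminus 1 z)).
Proof.
  intros Hz.
  destruct (cser_exists (fun n => Cpow z n) (fun n => Cmod z ^ n)) as [G HG].
  { intros n. rewrite Cmod_pow. lra. }
  { apply ex_series_geom. rewrite Rabs_pos_eq; auto. apply Cmod_ge_0. }
  pose proof (cser_shift _ _ HG) as H1. pose proof (cser_scal z _ _ HG) as H2.
  assert (E : Cminus G (Cpow z 0) = Cmult z G).
  { apply (cser_unique _ _ _ H1). apply cser_ext with (2 := H2). intros n. rewrite Cpow_S. auto. }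
  assert (Hz1 : Cminus 1 z <> RtoC 0).
  { intros E1. assert (z = RtoC 1). { replace z with (Cminus 1 (Cminus 1 z)) by ring. rewrite E1. ring. }
    subst. rewrite Cmod_1 in Hz. lra. }
  replace (Cinv (Cminus 1 z)) with G; auto.
  simpl in E. replace G with (Cmult (Cinv (Cminus 1 z)) (Cmult (Cminus 1 z) G)) by (field; auto).
  replace (Cmult (Cminus 1 z) G) with (RtoC 1). ring.
  replace (Cmult (Cminus 1 z) G) with (Cminus G (Cmult z G)) by ring. rewrite <- E. ring.
Qed.

Lemma re_pos z : Cmod z < 1 -> 0 < Re (Cminus (Cmult 2 (Cinv (Cminus 1 z))) 1).
Proof.
  intros Hz. destruct z as [x y].
  assert (H : x * x + y * y < 1).
  { unfold Cmod in Hz. simpl in Hz. rewrite !Rmult_1_r in Hz.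
    apply sqrt_lt_1_alt' in Hz || (assert (x * x + y * y = sqrt (x * x + y * y) * sqrt (x * x + y * y)) by (rewrite sqrt_sqrt; nra); pose proof (sqrt_pos (x*x+y*y)); nra). }
  assert (Hx : x < 1) by nra.
  unfold Cminus, Cinv, Cmult, Cplus, Copp, Re. simpl.
  set (D := (1 + - x) * ((1 + - x) * 1) + (0 + - y) * ((0 + - y) * 1)).
  assert (HD : 0 < D).
  { unfold D. assert (0 < 1 + - x) by lra. assert (0 <= (0 + - y) * ((0 + - y) * 1)) by nra.
    assert (0 < (1 + - x) * ((1 + - x) * 1)) by (rewrite Rmult_1_r; apply Rmult_lt_0_compat; lra). lra. }
  assert (E : 2 * ((1 + - x) / D) - 0 * (- (0 + - y) / D) + - (1) = (2 * (1 + - x) - D) / D) by (field; lra).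
  replace (2 * (1 + - x) - D) with (1 - x * x - y * y) in E by (unfold D; ring).
  rewrite E. apply Rdiv_lt_0_compat; lra.
Qed.

Lemma cE beta n : 0 <= beta <= 1 ->
  Cmult (RtoC (INR (S n) - INR n * beta)) (aE beta (S n)) = if Nat.eqb n 0 then RtoC 1 else RtoC 2.
Proof.
  intros Hb. destruct n as [|n].
  - simpl. apply injective_projections; simpl; ring.
  - change (aE beta (S (S n))) with (RtoC (2 / (INR (S (S n)) - INR (S n) * beta))).
    simpl Nat.eqb. rewrite <- RtoC_mult. f_equal. pose proof (den_ge1 beta (S n) Hb). field. lra.
Qed.

Lemma extremal_class beta : 0 <= beta <= 1 -> classA_beta beta (fE beta) /\ taylor_on_disk (fE beta) (aE beta).
Proof.
  intros Hb.
  assert (HT : forall z, Cmod z < 1 -> cser (fun n => Cmult (aE beta n) (Cpow z n)) (fE beta z)).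
  { intros z Hz. apply fE_ser; auto. }
  pose proof (pser_deriv (aE beta) (fE beta) HT) as HDer.
  assert (H0 : Cmod (RtoC 0) < 1) by (rewrite Cmod_0; lra).
  split; [split; [split; [|split] |] |].
  - intros z Hz. destruct (HDer z Hz) as [D [_ HD]]. exists D. exact HD.
  - pose proof (val_at0 _ _ (HT _ H0)). rewrite H. reflexivity.
  - destruct (HDer _ H0) as [D0 [HD0 HdD0]]. pose proof (val_at0 _ _ HD0) as E.
    rewrite E in HdD0. unfold dser in HdD0. simpl aE in HdD0. simpl INR in HdD0.
    replace (Cmult (RtoC 1) (RtoC 1)) with (RtoC 1) in HdD0 by ring. exact HdD0.
  - intros z d Hz Hz0 Hd. destruct (HDer z Hz) as [D [HD HdD]].
    pose proof (deriv_uniq _ _ _ _ Hd HdD) as E. subst d.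
    assert (a0 : aE beta O = RtoC 0) by reflexivity.
    pose proof (p_series beta (aE beta) (fE beta z) D z a0 Hz0 (HT z Hz) HD) as HP.
    assert (HP2 : cser (fun n => Cmult (Cmult (RtoC (INR (S n) - INR n * beta)) (aE beta (S n))) (Cpow z n))
                       (Cminus (Cmult 2 (Cinv (Cminus 1 z))) 1)).
    { pose proof (cser_minus _ _ _ _ (cser_scal 2 _ _ (geom_C z Hz)) (cser_delta 0 (RtoC 1))) as H.
      apply cser_ext with (2 := H). intros n. rewrite cE by auto.
      destruct n; simpl Nat.eqb; cbv iota. simpl. ring. ring. }
    rewrite (cser_unique _ _ _ HP HP2). apply re_pos. exact Hz.
  - intros z Hz. apply pser_cser. apply HT. exact Hz.
Qed.

Lemma extremal_vals beta : 0 <= beta <= 1 ->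
  Cmod (invA2 (aE beta)) = 2 / (2 - beta) /\
  Cmod (invA3 (aE beta)) = 2 * (8 - 4 * beta - beta ^ 2) / ((2 - beta) ^ 2 * (3 - 2 * beta)).
Proof.
  intros Hb. split.
  - unfold invA2. change (aE beta 2%nat) with (RtoC (2 / (INR 2 - INR 1 * beta))).
    rewrite Cmod_opp, Cmod_R. simpl INR. rewrite Rabs_pos_eq.
    f_equal. field. apply Rdiv_le_0_compat; lra.
  - unfold invA3. change (aE beta 2%nat) with (RtoC (2 / (INR 2 - INR 1 * beta))).
    change (aE beta 3%nat) with (RtoC (2 / (INR 3 - INR 2 * beta))).
    simpl INR.
    replace (Cplus (Copp (RtoC (2 / (1 + 1 + 1 - (1 + 1) * beta))))
         (Cmult (RtoC 2) (Cmult (RtoC (2 / (1 + 1 - 1 * beta))) (RtoC (2 / (1 + 1 - 1 * beta))))))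
      with (RtoC (2 * (8 - 4 * beta - beta ^ 2) / ((2 - beta) ^ 2 * (3 - 2 * beta)))).
    + rewrite Cmod_R, Rabs_pos_eq; auto. apply Rdiv_le_0_compat. simpl; nra.
      apply Rmult_lt_0_compat; [apply pow_lt|]; lra.
    + apply injective_projections; simpl; field; lra.
Qed.


Theorem theorem2p2 (beta : R) (hb0 : 0 <= beta) (hb1 : beta <= 1) :
  (forall (f : C -> C) (a : nat -> C),
     classA_beta beta f -> taylor_on_disk f a ->
     Cmod (invA2 a) <= 2 / (2 - beta) /\
     Cmod (invA3 a) <= 2 * (8 - 4 * beta - beta ^ 2)
                        / ((2 - beta) ^ 2 * (3 - 2 * beta))) /\
  (exists (f : C -> C) (a : nat -> C),
     classA_beta beta f /\ taylor_on_disk f a /\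
     Cmod (invA2 a) = 2 / (2 - beta)) /\
  (exists (f : C -> C) (a : nat -> C),
     classA_beta beta f /\ taylor_on_disk f a /\
     Cmod (invA3 a) = 2 * (8 - 4 * beta - beta ^ 2)
                        / ((2 - beta) ^ 2 * (3 - 2 * beta))).
Proof.
  assert (Hb : 0 <= beta <= 1) by (split; assumption).
  destruct (extremal_class beta Hb) as [H1 H2].
  destruct (extremal_vals beta Hb) as [V1 V2].
  split; [|split].
  - intros f a Hf Ht. exact (upper beta hb0 hb1 f a Hf Ht).
  - exists (fE beta), (aE beta). auto.
  - exists (fE beta), (aE beta). auto.
Qed.
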